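(* Let $p$ be an odd prime, $G$ a finite group with a Sylow $p$-subgroup $P$, and $H$ a normal subgroup of $G$ such that $G = PH$. Set $Q = P \cap H$. Let $P$ act by conjugation on $N_H(Q)/QC_H(Q)$. Then $C_{N_H(Q)/QC_H(Q)}(P) = N_H(P)C_H(Q)/QC_H(Q)$, and the inclusion $N_H(P) \subseteq N_G(P)$ induces a well-defined surjective group homomorphism $$C_{N_H(Q)/QC_H(Q)}(P) \to N_G(P)/PC_G(P)$$ (sending the coset of $n \in N_H(P)$ to $nPC_G(P)$) whose kernel is a $p$-group.
   Context: $C_X(P)$ for a group $X$ on which $P$ acts denotes the subgroup of $P$-fixed elements. *)

(* Defs.v *)
From mathcomp Require Import all_boot all_fingroup all_solvable.
Set Implicit Arguments. Unset Strict Implicit. Unset Printing Implicit Defensive.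

(* Main.v *)
Require Import Defs.
From mathcomp Require Import all_boot all_fingroup all_solvable.
Local Open Scope group_scope.

Lemma p'_cent (gT : finGroupType) (p : nat) (P Q : {group gT}) (y : gT) :
  p.-group P -> Q <| P -> p^'.-elt y -> y \in 'N(P) -> y \in 'C(Q) ->
  [~: P, <[y]>] \subset Q -> y \in 'C(P).
Proof.
move=> pP nsQP p'y nPy cQy sPyQ.
have sQP := normal_sub nsQP.
have nQP := normal_norm nsQP.
set A := <[y]>.
have nPA : A \subset 'N(P) by rewrite cycle_subG.
have cQA : A \subset 'C(Q) by rewrite cycle_subG.
have nQA : A \subset 'N(Q) by apply: cents_norm.
have coQA : coprime #|Q| #|A|.
  by rewrite (pnat_coprime (pgroupS sQP pP)) // -orderE.
have solQ : solvable Q := pgroup_sol (pgroupS sQP pP).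
have E := coprime_norm_quotient_cent nPA nQA coQA solQ.
have E2 : 'C_(P / Q)(A / Q) = P / Q.
  by apply/setIidPl; rewrite quotient_cents2.
rewrite E2 in E.
have : P \subset Q * 'C_P(A).
  by rewrite -quotientSK // E.
move=> sP.
have: P \subset 'C(A).
  apply: subset_trans sP _; rewrite mul_subG ?subsetIr //.
  by rewrite centsC.
by rewrite centsC cycle_subG.
Qed.

Section Main.
Variables (gT : finGroupType) (p : nat) (G P H : {group gT}).
Hypotheses (sylP : p.-Sylow(G) P) (nsHG : H <| G) (defG : P * H = G).

Local Notation Q := (P :&: H).
Local Notation C := ('C_H(P :&: H)).
Local Notation K := ((P :&: H) <*> 'C_H(P :&: H)).
Local Notation L := (P <*> 'C_G(P)).
Local Notation M := ('N_H(P)).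

Let sPG : P \subset G := pHall_sub sylP.
Let pP : p.-group P := pHall_pgroup sylP.
Let sHG : H \subset G := normal_sub nsHG.
Let nHG : G \subset 'N(H) := normal_norm nsHG.
Let nHP : P \subset 'N(H) := subset_trans sPG nHG.

Lemma nsQP : Q <| P.
Proof. by rewrite /normal subsetIl normsI ?normG. Qed.

Lemma sQK : Q \subset K. Proof. exact: joing_subl. Qed.
Lemma sCK : C \subset K. Proof. exact: joing_subr. Qed.
Lemma sKH : K \subset H.
Proof. by rewrite join_subG subsetIr subsetIl. Qed.

Lemma normsK (A : {group gT}) : A \subset 'N(Q) -> A \subset 'N(H) -> A \subset 'N(K).
Proof.
move=> nQA nHA; rewrite normsY // normsI // norms_cent //.
Qed.

Lemma nKP : P \subset 'N(K).
Proof. by rewrite normsK // normal_norm // nsQP. Qed.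

Lemma nQM : M \subset 'N(Q).
Proof. by rewrite normsI // ?subsetIr // subIset // normG. Qed.

Lemma nKM : M \subset 'N(K).
Proof. by rewrite normsK ?nQM // subIset // normG. Qed.

Lemma nKNQ : 'N_H(Q) \subset 'N(K).
Proof. by rewrite normsK ?subsetIr // subIset // normG. Qed.

Lemma sMG : M \subset G. Proof. by rewrite subIset ?sHG. Qed.

Lemma nLNG : 'N_G(P) \subset 'N(L).
Proof. by rewrite normsY ?subsetIr // normsI ?norms_cent ?subsetIr // subIset // normG. Qed.

Lemma nLM : M \subset 'N(L).
Proof. apply: subset_trans nLNG; exact: setSI. Qed.


Lemma commMP_Q n a : n \in M -> a \in P -> [~ n, a] \in Q.
Proof.
move=> Mn Pa; have: [~ n, a] \in [~: M, P] by rewrite mem_commg.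
apply/subsetP; rewrite subsetI commg_subr subsetIr /=.
apply: subset_trans (commgSS (subsetIl H 'N(P)) sPG) _.
by rewrite commg_subl.
Qed.

Lemma sMNQ : M \subset 'N_H(Q).
Proof. by rewrite subsetI subsetIl nQM. Qed.

Lemma FixE : 'Fix_('N_H(Q) / K | 'J / K)(P) = M / K.
Proof.
apply/eqP; rewrite eqEsubset; apply/andP; split; last first.
  apply/subsetP=> _ /morphimP[n Nn Mn ->]; rewrite inE; apply/andP; split.
    by rewrite mem_quotient // (subsetP sMNQ).
  apply/afixP=> a Pa; rewrite qactJ (subsetP nKP a Pa) -morphJ //; last exact: (subsetP nKP).
  by rewrite conjg_mulR; apply: coset_kerr; rewrite (subsetP sQK) // commMP_Q.
apply/subsetP=> X /setIP[XN /afixP fixX].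
case/morphimP: XN => n Nn NHQn defX.
have cnK a : a \in P -> [~ n, a] \in K.
  move=> Pa; have := fixX a Pa.
  rewrite defX qactJ (subsetP nKP a Pa) -morphJ //; last exact: (subsetP nKP).
  rewrite commgEl.
  move/(kercoset_rcoset (groupJ Nn (subsetP nKP a Pa)) Nn) => [z Kz ->].
  by rewrite -conjgE memJ_norm.
have nKP' := nKP.
have sKPG : K <*> P \subset G by rewrite join_subG (subset_trans sKH sHG) sPG.
have sylPK : p.-Sylow(K <*> P) P := pHall_subl (joing_subr _ _) sKPG sylP.
have sPnK : P :^ n \subset K <*> P.
  apply/subsetP=> _ /imsetP[a Pa ->].
  rewrite conjg_mulR groupM //; first exact: (subsetP (joing_subr K P)).
  apply: (subsetP (joing_subl K P)).
  by rewrite -invg_comm groupV cnK.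
have sylPn : p.-Sylow(K <*> P) (P :^ n).
  by move: sylPK; rewrite !pHallE cardJg sPnK => /andP[].
have [y KPy defPn] := Sylow_trans sylPK sylPn.
move: KPy; rewrite /= (norm_joinEr nKP) -normC // => /mulsgP[a k Pa Kk defy].
have Hn : n \in H by case/setIP: NHQn.
have Kk' : k \in H := subsetP sKH k Kk.
have Nk : k \in 'N(K) := subsetP (normG K) k Kk.
have Mnk : n * k^-1 \in M.
  rewrite inE groupM ?groupV //=; apply/normP.
  by rewrite conjsgM defPn defy conjsgM (conjGid Pa) conjsgK.
rewrite defX -(mulgKV k n) /= coset_kerr //; exact: mem_quotient.
Qed.

Lemma constt_in (A : {group gT}) (pi : nat_pred) x : x \in A -> x.`_pi \in A.
Proof. by move=> Ax; have := cycle_constt pi x; apply/subsetP; rewrite cycle_subG. Qed.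

Lemma sylPN : p.-Sylow('N_G(P)) P.
Proof. by apply: pHall_subl sylP; rewrite ?subsetIl // subsetI sPG normG. Qed.

Lemma sMCL : M :&: C \subset L.
Proof.
apply/subsetP=> c /setIP[Mc Cc].
have NGc : c \in 'N_G(P) by apply: (subsetP (setSI _ sHG)).
have Ncp : c.`_p \in 'N_G(P) by apply: constt_in.
rewrite -(consttC p c) groupM //.
  apply: (subsetP (joing_subl P 'C_G(P))).
  by rewrite (mem_normal_Hall sylPN) ?normal_subnorm // p_elt_constt.
apply: (subsetP (joing_subr P 'C_G(P))).
set y := c.`_p^'.
have Cy : y \in C by apply: constt_in.
have My : y \in M by apply: constt_in.
have Gy : y \in G by apply: (subsetP sMG).
rewrite inE Gy /=.
apply: (@p'_cent gT p P (P :&: H)%G y pP nsQP).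
- by rewrite /y; apply: p_elt_constt.
- by case/setIP: My.
- by case/setIP: Cy.
have Hy : y \in H by case/setIP: My.
have Ny : y \in 'N(P) by case/setIP: My.
rewrite subsetI commg_subl cycle_subG Ny /=.
have sYH : <[y]> \subset H by rewrite cycle_subG.
apply: subset_trans (commgSS sPG sYH) _.
by rewrite commg_subr.
Qed.

Lemma sPL : P \subset L. Proof. exact: joing_subl. Qed.

Lemma sQM : Q \subset M.
Proof. by rewrite subsetI subsetIr (subset_trans (subsetIl P H) (normG P)). Qed.

Lemma sMKL : M :&: K \subset L.
Proof.
have nQC : C \subset 'N(Q) by rewrite subIset // cent_sub orbT.
apply/subsetP=> x /setIP[Mx]; rewrite /= (norm_joinEr nQC).
case/mulsgP=> q c Qq Cc defx.
have Mq : q \in M := subsetP sQM q Qq.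
have Mc : c \in M by rewrite -(mulKg q c) -defx groupM ?groupV.
rewrite defx groupM //.
  by apply: (subsetP sPL); case/setIP: Qq.
by apply: (subsetP sMCL); rewrite inE Mc.
Qed.

Lemma imageE : M / L = 'N_G(P) / L.
Proof.
apply/eqP; rewrite eqEsubset quotientS ?setSI //=.
have sNPM : 'N_G(P) \subset P * M.
  apply/subsetP=> x /setIP[Gx Nx]; move: Gx; rewrite -defG.
  case/mulsgP=> a h Pa Hh defx.
  rewrite defx mem_mulg // inE Hh /=.
  have Na : a \in 'N(P) := subsetP (normG P) a Pa.
  by rewrite -(mulKg a h) -defx groupM ?groupV.
apply: subset_trans (quotientS _ sNPM) _.
rewrite -(quotientMidl L M) quotientS //.
by rewrite mulSg ?sPL.
Qed.

Lemma kerP : p.-group ((M :&: L) / K).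
Proof.
set R := M :&: L.
have nKR : R \subset 'N(K) by rewrite subIset ?nKM.
have nCN : 'N_G(P) \subset 'N('C_G(P)).
  by rewrite normsI ?norms_cent ?subsetIr // subIset ?normG.
have nCR : R \subset 'N('C_G(P)) :=
  subset_trans (subset_trans (subsetIl _ _) (setSI _ sHG)) nCN.
rewrite /pgroup card_quotient // -indexgI.
have sRCK : R :&: 'C_G(P) \subset R :&: K.
  apply/subsetP=> x /setIP[Rx Cx]; rewrite inE Rx /=.
  move: Rx Cx; rewrite /R => /setIP[/setIP[Hx _] _] /setIP[_ cPx].
  apply: (subsetP sCK); rewrite inE Hx /=.
  exact: (subsetP (centS (subsetIl P H))).
apply: pnat_dvd (indexgS _ sRCK) _.
rewrite indexgI -card_quotient //.
have nPC : 'C_G(P) \subset 'N(P) by rewrite subIset // cent_sub orbT.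
apply: pgroupS (quotientS _ (subsetIr M L)) _.
rewrite /= (norm_joinEr nPC) quotientMidr.
exact: quotient_pgroup.
Qed.

Lemma main_sec :
  'Fix_('N_H(Q) / K | 'J / K)(P) = (M * C) / K
  /\
  exists f : {morphism 'Fix_('N_H(Q) / K | 'J / K)(P) >-> coset_of L},
    [/\ forall n, n \in M -> f (coset K n) = coset L n,
        f @* 'Fix_('N_H(Q) / K | 'J / K)(P) = 'N_G(P) / L
      & p.-group ('ker f)].
Proof.
rewrite FixE; split.
  apply/eqP; rewrite eqEsubset quotientS ?mulG_subl //=.
  by apply: subset_trans (quotientS _ (mulgS M sCK)) _; rewrite quotientMidr.
have sKqKf : 'ker (restrm nKM (coset K)) \subset 'ker (restrm nLM (coset L)).
  by rewrite !ker_restrm !ker_coset subsetI subsetIl sMKL.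
have Eq : restrm nKM (coset K) @* M = M / K by rewrite morphim_restrm setIid.
rewrite -Eq.
exists (factm sKqKf (subxx M)); split.
- move=> n Mn; exact: (factmE sKqKf (subxx M) Mn).
- by rewrite morphim_factm morphim_restrm setIid; exact: imageE.
- rewrite ker_factm; apply: pgroupS kerP.
  rewrite /= ker_restrm ker_coset morphim_restrm setIA setIid.
  exact: subxx.
Qed.
End Main.

Theorem lemma2p1 (gT : finGroupType) (p : nat) (G P H : {group gT}) :
  prime p -> odd p ->
  P \in 'Syl_p(G) -> H <| G -> P * H = G ->
  'Fix_('N_H(P :&: H) / ((P :&: H) <*> 'C_H(P :&: H)) | 'J / ((P :&: H) <*> 'C_H(P :&: H)))(P)
    = ('N_H(P) * 'C_H(P :&: H)) / ((P :&: H) <*> 'C_H(P :&: H))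
  /\
  exists f : {morphism 'Fix_('N_H(P :&: H) / ((P :&: H) <*> 'C_H(P :&: H)) | 'J / ((P :&: H) <*> 'C_H(P :&: H)))(P)
               >-> coset_of (P <*> 'C_G(P))},
    [/\ forall n, n \in 'N_H(P) ->
          f (coset ((P :&: H) <*> 'C_H(P :&: H)) n) = coset (P <*> 'C_G(P)) n,
        f @* 'Fix_('N_H(P :&: H) / ((P :&: H) <*> 'C_H(P :&: H)) | 'J / ((P :&: H) <*> 'C_H(P :&: H)))(P)
          = 'N_G(P) / (P <*> 'C_G(P))
      & p.-group ('ker f)].
Proof.
move=> _ _ SylP nsHG defG.
have sylP : p.-Sylow(G) P by move: SylP; rewrite inE.
exact: main_sec sylP nsHG defG.
Qed.
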